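(* Let $r\ge2$, $\ell\in\mathcal M^1(\mathcal R_r)$ and $\epsilon>0$. If $\ell^i\le\epsilon$ for some $i\in[r]$, then $\ell^j>-\log(\exp(\epsilon)-1)$ for every $j\in[r]\setminus\{i\}$.
   Context: $\mathcal R_r$ is the rose with one vertex and $r$ loop edges identified with $[r]=\{1,\dots,r\}$; a length function is $\ell=(\ell^1,\dots,\ell^r)\in\mathbb R^r_{>0}$. The entropy is $\mathfrak h_{\mathcal R_r}(\ell)=\lim_{t\to\infty}\frac1t\log\#\{\gamma:\ell(\gamma)\le t\}$ over based circuits $\gamma$ (cyclically reduced closed edge paths in the oriented petals), and $\mathcal M^1(\mathcal R_r)=\{\ell:\mathfrak h_{\mathcal R_r}(\ell)=1\}$. *)

(* Defs.v *)
From HB Require Import structures.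
From mathcomp Require Import all_boot all_order all_algebra.
From mathcomp Require Import all_classical all_reals all_analysis.
Set Implicit Arguments. Unset Strict Implicit. Unset Printing Implicit Defensive.
Import Order.TTheory GRing.Theory Num.Theory numFieldNormedType.Exports.
Local Open Scope classical_set_scope.
Local Open Scope ring_scope.

(* A letter of the rose R_r: a petal i : 'I_r traversed with orientation b
   (true = positive, false = reversed). *)
Definition letter (r : nat) := ('I_r * bool)%type.

Definition inv_letters (r : nat) (a b : letter r) : bool :=
  (a.1 == b.1) && (a.2 != b.2).

(* Based circuit: nonempty closed edge path which is cyclically reduced,
   i.e. no backtracking between consecutive letters nor between the last
   and the first letter (path.v's [cycle]). *)
Definition is_circuit (r n : nat) (w : n.-tuple (letter r)) : bool :=
  (0 < n)%N && cycle (fun a b => ~~ inv_letters a b) w.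

Definition word_length (R : realType) (r : nat) (l : 'I_r -> R) (w : seq (letter r)) : R :=
  \sum_(a <- w) l a.1.

(* Since every letter has length >= min_i l i
   >= (sum_i (l i)^-1)^-1, circuits with l(gamma) <= t have at most
   truncn (t * sum_i (l i)^-1) letters, so summing over word sizes below
   that bound (+1) counts all of them (for positive l). *)
Definition count_circuits (R : realType) (r : nat) (l : 'I_r -> R) (t : R) : nat :=
  \sum_(n < (Num.truncn (t * \sum_(i < r) (l i)^-1)).+1)
     #|[set w : n.-tuple (letter r) | is_circuit w && (word_length l w <= t)%R]|.

Definition entropy_is (R : realType) (r : nat) (l : 'I_r -> R) (h : R) : Prop :=
  ln (count_circuits l t)%:R / t @[t --> +oo%R] --> (h : R).

Definition in_M1 (R : realType) (r : nat) (l : 'I_r -> R) : Prop :=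
  (forall i, 0 < l i) /\ entropy_is l 1.

(* Main.v *)
From HB Require Import structures.
From mathcomp Require Import all_boot all_order all_algebra.
From mathcomp Require Import all_classical all_reals all_analysis.
From mathcomp Require Import lra zify ring.
Require Import Defs.
Import Order.TTheory GRing.Theory Num.Theory.
Local Open Scope ring_scope.

Lemma bern (R : realType) (d : R) (k : nat) : 0 <= d -> 1 + k%:R * d <= (1 + d) ^+ k.
Proof.
move=> d0; elim: k => [|k IH]; first by rewrite expr0 mul0r addr0.
rewrite exprS -natr1.
have h1 : 0 <= k%:R * d by apply: mulr_ge0.
have : (1 + d) * (1 + k%:R * d) <= (1 + d) * (1 + d) ^+ k.
  by apply: ler_wpM2l => //; lra.
have : 0 <= d * (k%:R * d) by apply: mulr_ge0.
nra.
Qed.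

Lemma big_growth (R : realType) (s : R) : 1 < s -> exists n : nat, n.+1%:R < s ^+ n.
Proof.
move=> s1; set d := s - 1.
have d0 : 0 < d by rewrite /d; lra.
set k := (Num.truncn (2 / (d * d))).+1.
have hk : 2 / (d * d) < k%:R by rewrite /k truncnS_gt.
have hk' : 2 < k%:R * (d * d).
  by rewrite -ltr_pdivrMr ?mulr_gt0.
exists (k + k)%N.
rewrite exprD.
have b := @bern R d k (ltW d0).
have e : s = 1 + d by rewrite /d; lra.
rewrite e.
have k0 : 0 <= k%:R :> R by [].
have : (1 + k%:R * d) * (1 + k%:R * d) <= (1 + d) ^+ k * (1 + d) ^+ k.
  apply: ler_pM => //; apply: addr_ge0 => //; apply: mulr_ge0 => //; exact: ltW.
rewrite -addSn natrD -natr1.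
have : 0 <= k%:R * d by apply: mulr_ge0 => //; exact: ltW.
nra.
Qed.

Lemma exists_block (R : realType) (u v : R) : 0 < u -> 0 < v -> 1 < u + v ->
  exists n p : nat, (p <= n)%N /\ 1 < 'C(n, p)%:R * (u ^+ (n - p) * v ^+ p).
Proof.
move=> u0 v0 s1.
have [n hn] := @big_growth R _ s1.
apply/not_existsP => /= H.
have : (u + v) ^+ n <= n.+1%:R.
  rewrite exprDn.
  have -> : n.+1%:R = \sum_(i < n.+1) (1 : R).
    by rewrite sumr_const card_ord.
  apply: ler_sum => i _.
  rewrite -mulr_natl mulrC.
  have := H n; move/forallNP => /(_ i) /not_andP [/(_ (ltn_ord i)) //|].
  by move/negP; rewrite -leNgt mulrC.
lra.
Qed.
Lemma sum_blocks (R : realType) (f : nat -> R) (m n : nat) :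
  \sum_(0 <= k < m * n) f k = \sum_(0 <= b < m) \sum_(0 <= o < n) f (b * n + o)%N.
Proof.
elim: m => [|m IH]; first by rewrite mul0n !big_geq.
rewrite big_nat_recr //= (big_cat_nat _ (n := m * n)) //=; last by rewrite mulSn leq_addl.
rewrite IH; congr (_ + _).
rewrite mulSn -{1}[(m * n)%N]add0n big_addn addnK.
by apply: eq_bigr => o _; rewrite [(o + _)%N]addnC.
Qed.


Lemma sum_if (R : realType) (N : nat) (B : {set 'I_N}) (x y : R) :
  \sum_(o < N) (if o \in B then y else x) = #|B|%:R * y + (N - #|B|)%:R * x.
Proof.
have e : forall o : 'I_N, (if o \in B then y else x) = x + (o \in B)%:R * (y - x).
  by move=> o; case: (o \in B); rewrite ?mul1r ?mul0r ?addr0 //; rewrite addrC subrK.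
rewrite (eq_bigr _ (fun o _ => e o)) big_split /= sumr_const card_ord.
rewrite -big_distrl /=.
have -> : \sum_(o < N) ((o \in B)%:R : R) = #|B|%:R.
  rewrite -natr_sum -sum1_card big_mkcond /=; congr _%:R.
  rewrite [RHS]big_mkcond /=; apply: eq_bigr => o _; by case: (o \in B).
have hB : (#|B| <= N)%N by rewrite -[X in (_ <= X)%N]card_ord max_card.
rewrite natrB // -mulr_natl; ring.
Qed.

Lemma cycle_true (T : Type) (s : seq T) : cycle (fun _ _ => true) s.
Proof.
have pt : forall (x : T) t, path (fun _ _ => true) x t by move=> x t; elim: t x => //=.
by case: s => [|x s] //=; apply: pt.
Qed.

Definition letf (r m n : nat) (i j : 'I_r) (F : {ffun 'I_m.+1 -> {set 'I_n.+1}}) (k : nat) : letter r :=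
  (if inord (k %% n.+1) \in F (inord (k %/ n.+1)) then j else i, true).
Definition phi (r m n : nat) (i j : 'I_r) (F : {ffun 'I_m.+1 -> {set 'I_n.+1}}) : (m.+1 * n.+1).-tuple (letter r) :=
  [tuple letf r m n i j F (val k) | k < m.+1 * n.+1].

Lemma phi_circ (r m n : nat) (i j : 'I_r) (F : {ffun 'I_m.+1 -> {set 'I_n.+1}}) : is_circuit (@phi r m n i j F).
Proof.
rewrite /is_circuit muln_gt0 /=.
apply: (@sub_in_cycle _ (fun a : letter r => a.2) (fun _ _ => true)); last exact: cycle_true.
    move=> [x1 x2] [y1 y2]; rewrite /inv_letters /= !unfold_in /= => -> -> _.
  by rewrite andbF.
by rewrite all_map; apply/allP => k _.
Qed.

Lemma phi_inj (r m n : nat) (i j : 'I_r) : i != j -> injective (phi r m n i j).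
Proof.
move=> ij F1 F2 E; apply/ffunP => b; apply/setP => o.
have hk : (b * n.+1 + o < m.+1 * n.+1)%N.
  have := ltn_ord b; have := ltn_ord o; nia.
have := congr1 (fun w => tnth w (Ordinal hk)) E; rewrite !tnth_mktuple /letf /=.
rewrite modnMDl modn_small // divnMDl // divn_small // addn0 !inord_val.
case: (o \in F1 b); case: (o \in F2 b) => //= -[e]; move: ij; rewrite e eqxx.
all: by [].
Qed.

Lemma phi_len (R : realType) (r m n : nat) (i j : 'I_r) (l : 'I_r -> R) (p : nat)
  (F : {ffun 'I_m.+1 -> {set 'I_n.+1}}) :
  F \in ffun_on [set B : {set 'I_n.+1} | #|B| == p] ->
  word_length l (phi r m n i j F) = m.+1%:R * (p%:R * l j + (n.+1 - p)%:R * l i).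
Proof.
move=> /ffun_onP hF.
rewrite /word_length big_tuple.
under eq_bigr do rewrite tnth_mktuple.
rewrite (eq_bigr (fun k : 'I_(m.+1 * n.+1) => l (letf r m n i j F k).1)) //.
rewrite -(big_mkord (fun _ => true) (fun k => l (letf r m n i j F k).1)) sum_blocks big_mkord.
have -> : m.+1%:R * (p%:R * l j + (n.+1 - p)%:R * l i) = \sum_(b < m.+1) (p%:R * l j + (n.+1 - p)%:R * l i).
  by rewrite sumr_const card_ord mulr_natl.
apply: eq_bigr => b _.
rewrite big_mkord.
have -> : \sum_(o < n.+1) l (letf r m n i j F (b * n.+1 + o)).1 =
   \sum_(o < n.+1) (if o \in F b then l j else l i).
  apply: eq_bigr => o _.
  rewrite /letf modnMDl modn_small // divnMDl // divn_small // addn0 !inord_val.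
  by case: (o \in F b).
rewrite sum_if.
by have := hF b; rewrite inE => /eqP ->.
Qed.

Lemma count_lb (R : realType) (r : nat) (l : 'I_r -> R) (i j : 'I_r) (n p m : nat) (t : R) :
  i != j -> (forall k, 0 < l k) -> (p <= n.+1)%N ->
  m.+1%:R * (p%:R * l j + (n.+1 - p)%:R * l i) <= t ->
  ('C(n.+1, p) ^ m.+1 <= count_circuits l t)%N.
Proof.
move=> ij lpos hp hL.
set S := \sum_(k < r) (l k)^-1.
have hS : forall k, 1 <= l k * S.
  move=> k; rewrite /S (bigD1 k) //= mulrDr mulfV ?gt_eqF //.
  rewrite lerDl; apply: mulr_ge0; first exact: ltW.
  by apply: sumr_ge0 => k' _; rewrite invr_ge0 ltW.
have S0 : 0 <= S by apply: sumr_ge0 => k' _; rewrite invr_ge0 ltW.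
have hLS : n.+1%:R <= (p%:R * l j + (n.+1 - p)%:R * l i) * S.
  rewrite mulrDl -!mulrA.
  have e : n.+1%:R = p%:R + (n.+1 - p)%:R :> R by rewrite -natrD subnKC.
  rewrite e; apply: lerD.
    by rewrite -{1}[p%:R]mulr1; apply: ler_wpM2l => //.
  by rewrite -{1}[(n.+1 - p)%:R]mulr1; apply: ler_wpM2l => //.
have t0 : 0 <= t * S.
  apply: mulr_ge0 => //; apply: le_trans hL.
  apply: mulr_ge0 => //; apply: addr_ge0; apply: mulr_ge0 => //; exact: ltW.
have hN : (m.+1 * n.+1 < (Num.truncn (t * S)).+1)%N.
  rewrite ltnS truncn_ge_nat // natrM.
  apply: (le_trans _ (ler_wpM2r S0 hL)).
  by rewrite -mulrA; apply: ler_wpM2l.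
rewrite /count_circuits -/S (bigD1 (Ordinal hN)) //=.
apply: leq_trans (leq_addr _ _).
set D := ffun_on [set B : {set 'I_n.+1} | #|B| == p] : {pred {ffun 'I_m.+1 -> {set 'I_n.+1}}}.
have cD : #|D| = ('C(n.+1, p) ^ m.+1)%N by rewrite card_ffun_on card_draws !card_ord.
rewrite -cD -(card_in_imset (f := phi r m n i j) (D := D)); last by move=> x y _ _; apply: phi_inj.
apply: subset_leq_card; apply/fintype.subsetP => w /imsetP [F hF ->].
rewrite in_setE; apply/andP; split; first exact: phi_circ.
have := @phi_len R r m n i j l p F hF.
move=> e; exact: (eq_ind_r (fun z => z <= t) hL e).
Qed.

Lemma key (R : realType) (r : nat) (l : 'I_r -> R) (i j : 'I_r) :
  in_M1 l -> i != j -> expR (- l i) + expR (- l j) <= 1.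
Proof.
case=> lpos hent ij.
rewrite leNgt; apply/negP => s1.
have [n0 [p [hp hb]]] := @exists_block R _ _ (expR_gt0 _) (expR_gt0 _) s1.
case: n0 hp hb => [|n] hp hb.
  move: hp; rewrite leqn0 => /eqP p0; subst p.
  by move: hb; rewrite bin0 subn0 !expr0 !mulr1 ltxx.
set L := p%:R * l j + (n.+1 - p)%:R * l i.
have eL : expR (- l i) ^+ (n.+1 - p) * expR (- l j) ^+ p = expR (- L).
  by rewrite -!expRM_natl -expRD /L; congr expR; ring.
rewrite eL in hb.
set K := 'C(n.+1, p)%:R : R.
have K0 : 0 < K by rewrite /K ltr0n bin_gt0.
have hKL : L < ln K.
  rewrite -{1}(expRK L) ltr_ln ?posrE ?expR_gt0 //.
  have : expR L * 1 < expR L * (K * expR (- L)) by rewrite ltr_pM2l ?expR_gt0.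
  by rewrite mulr1 mulrCA -expRD subrr expR0 mulr1.
have L0 : 0 < L.
  rewrite /L; case: (posnP p) => [->|pp].
    by rewrite mul0r add0r subn0 mulr_gt0.
  by rewrite ltr_pwDl ?mulr_gt0 ?ltr0n // mulr_ge0 // ltW.
have lnK0 : 0 < ln K by apply: lt_trans hKL.
set q := ln K / L.
have q1 : 1 < q by rewrite /q ltr_pdivlMr // mul1r.
set c := (1 + q) / 2.
have hc : 1 < c by rewrite /c; lra.
have hcq : c < q by rewrite /c; lra.
rewrite /entropy_is in hent.
have H1 : \forall t \near +oo, ln (count_circuits l t)%:R / t < c.
  exact: (cvgr_lt _ hent c hc).
have H2 : \forall t \near +oo, c <= ln (count_circuits l t)%:R / t.
  exists (Num.max (2 * L) (2 * ln K / (q - 1))); split; first by rewrite num_real.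
  move=> t; rewrite gt_max => /andP [t1 t2].
  have t0 : 0 < t by apply: lt_trans t1; rewrite mulr_gt0.
  have tL0 : 0 <= t / L by rewrite divr_ge0 // ltW.
  set M := Num.truncn (t / L).
  have hM : M%:R <= t / L by rewrite truncn_le.
  have hM2 : t / L < M.+1%:R by rewrite truncnS_gt.
  have M0 : (0 < M)%N.
    rewrite truncn_gt0 ler_pdivlMr // mul1r; apply: le_trans (ltW t1).
    lra.
  have [m eM] : exists m, M = m.+1 by exists M.-1; rewrite prednK.
  have hL : m.+1%:R * L <= t by rewrite -eM -ler_pdivlMr.
  have hcnt := @count_lb R r l i j n p m t ij lpos hp hL.
  have Cpos : (0 < 'C(n.+1, p) ^ m.+1)%N by rewrite expn_gt0 bin_gt0 hp.
  have hX : M%:R * ln K <= ln (count_circuits l t)%:R.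
    rewrite eM mulr_natl -lnXn // /K -natrX ler_ln ?posrE ?ltr0n ?ler_nat //.
    exact: leq_trans hcnt.
  have hM3 : t / L - 1 <= M%:R by move: hM2; rewrite -natr1; lra.
  have E : (t / L - 1) * ln K <= M%:R * ln K by apply: ler_wpM2r => //; exact: ltW.
  have Cq : t / L * ln K = t * q by rewrite /q; field; rewrite gt_eqF.
  have D : 2 * ln K < t * (q - 1) by rewrite -ltr_pdivrMr // subr_gt0.
  rewrite ler_pdivlMr //.
  have : (t / L - 1) * ln K = t / L * ln K - ln K by ring.
  rewrite /c; nra.
have [t [ht1 ht2]] := filter_ex (filterI H1 H2).
move: ht1 ht2; lra.
Qed.

Theorem mainTheorem16 (R : realType) (r : nat) (l : 'I_r -> R) (eps : R) :
  (2 <= r)%N -> in_M1 l -> 0 < eps ->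
  forall i : 'I_r, l i <= eps ->
  forall j : 'I_r, j != i -> - ln (expR eps - 1) < l j.
Proof.
move=> _ hM eps0 i hi j ji.
have ij : i != j by rewrite eq_sym.
have hk := @key R r l i j hM ij.
have y1 : 1 < expR eps by rewrite expR_gt1.
have e1 : expR (- eps) * expR eps = 1 by rewrite -expRD addNr expR0.
have e2 : expR (- eps) <= expR (- l i) by rewrite ler_expR lerN2.
have hx : 0 < expR eps - 1 by rewrite subr_gt0.
have hlt : expR (- l j) < expR eps - 1.
  have p0 := expR_gt0 (- eps).
  nra.
rewrite ltrNl -(expRK (- l j)) ltr_ln ?posrE ?expR_gt0 //.
Qed.
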